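(* Let $W$ be an irreducible euclidean Coxeter group not of type $\widetilde A_n$ and $\sigma$ a chamber of its Coxeter complex with closest points $x_0,x_1$, bipartite line $L$ and bipartite involutions $w_0,w_1$. Then for $i\in\{0,1\}$, $w_i$ stabilizes $L$ and restricts to a reflection of $L$ fixing only the point $x_i$.
   Context: $W$ acts on a euclidean space $E$, generated by reflections in the facets of a euclidean simplex with dihedral angles submultiples of $\pi$, properly and cocompactly; chambers are images of the simplex. The diagram $\Gamma$ (a tree) has a unique bipartition, giving a partition $S_0\sqcup S_1$ of the reflections in the facets of $\sigma$ into pairwise-commuting sets; the bipartite involution $w_j$ is the product of the reflections in $S_j$. $F_j$ is the face of $\sigma$ cut out by the hyperplanes of the reflections in $S_j$, $B_j$ its affine hull; $x_0\in B_0$, $x_1\in B_1$ are the unique points realizing the distance between $B_0$ and $B_1$, and $L$ is the line through them. *)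

(* Defs.v *)
From HB Require Import structures.
From mathcomp Require Import all_boot all_order all_algebra all_fingroup.
From mathcomp Require Import all_classical all_reals all_analysis.
Set Implicit Arguments. Unset Strict Implicit. Unset Printing Implicit Defensive.
Import Order.TTheory GRing.Theory Num.Theory.
Local Open Scope classical_set_scope.
Local Open Scope ring_scope.

Section CoxeterDefs.
Variable R : realType.
Variable n : nat.
Implicit Types (x y : 'rV[R]_n) (v u : 'I_n.+1 -> 'rV[R]_n) (c : 'I_n.+1 -> R)
  (m : 'I_n.+1 -> 'I_n.+1 -> nat).

Definition dot x y : R := (x *m y^T) 0 0.
Definition eucl_dist x y : R := Num.sqrt (dot (x - y) (x - y)).

Definition affinely_independent v :=
  forall l : 'I_n.+1 -> R, \sum_k l k = 0 -> \sum_k l k *: v k = 0 ->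
  forall k, l k = 0.

Definition simplex_hull v : set 'rV[R]_n :=
  [set x | exists l : 'I_n.+1 -> R,
     (forall k, 0 <= l k) /\ \sum_k l k = 1 /\ x = \sum_k l k *: v k].

(* u i is the outward unit normal of the facet opposite to vertex i, and the
   hyperplane of that facet is {x | dot x (u i) = c i} *)
Definition facet_normals v u c :=
  forall i, dot (u i) (u i) = 1 /\
    (forall k, k != i -> dot (v k) (u i) = c i) /\ dot (v i) (u i) < c i.

Definition dihedral_angle u i j : R := acos (- dot (u i) (u j)).

Definition coxeter_angles u m :=
  forall i j, i != j -> (2 <= m i j)%N /\ dihedral_angle u i j = pi / (m i j)%:R.

(* orthogonal reflection in the hyperplane {x | dot x a = b}, a a unit vector *)
Definition refl (a : 'rV[R]_n) (b : R) x : 'rV[R]_n := x - (2 * (dot x a - b)) *: a.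

Definition diagram m : rel 'I_n.+1 := fun i j => (i != j) && (3 <= m i j)%N.

Definition irreducible_diagram m := forall i j, connect (diagram m) i j.

(* W of type tilde A_n (n >= 2): Gamma is a cycle through all vertices, all labels 3 *)
Definition type_tildeA m :=
  (2 <= n)%N /\ exists p : {perm 'I_n.+1}, forall i j, i != j ->
    m (p i) (p j) = (if (j == ordS i) || (i == ordS j) then 3 else 2)%N.

Definition is_bipartition m (S0 : {set 'I_n.+1}) :=
  forall i j, diagram m i j -> (i \in S0) != (j \in S0).

Definition face v u c (S : {set 'I_n.+1}) : set 'rV[R]_n :=
  [set x | simplex_hull v x /\ forall i, i \in S -> dot x (u i) = c i].

Definition affine_hull (A : set 'rV[R]_n) : set 'rV[R]_n :=
  [set x | exists (k : nat) (p : 'I_k -> 'rV[R]_n) (l : 'I_k -> R),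
     (forall t, A (p t)) /\ \sum_t l t = 1 /\ x = \sum_t l t *: p t].

Definition bip_inv u c (S : {set 'I_n.+1}) : 'rV[R]_n -> 'rV[R]_n :=
  foldr (fun i f => refl (u i) (c i) \o f) id (enum S).

Definition line_through x0 x1 : set 'rV[R]_n :=
  [set x0 + t *: (x1 - x0) | t in [set: R]].

Definition restricts_to_reflection_fixing (w : 'rV[R]_n -> 'rV[R]_n)
  (L : set 'rV[R]_n) (p : 'rV[R]_n) :=
  w @` L = L /\ (forall y, L y -> w y = 2 *: p - y) /\
  [set y | L y /\ w y = y] = [set p].

End CoxeterDefs.

(* Main.v *)
Require Import Defs.
From HB Require Import structures.
From mathcomp Require Import all_boot all_order all_algebra all_fingroup.
From mathcomp Require Import all_classical all_reals all_analysis.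
Import Order.TTheory GRing.Theory Num.Theory.
From mathcomp Require Import lra ring.
Set Implicit Arguments. Unset Strict Implicit.
Local Open Scope classical_set_scope.
Local Open Scope ring_scope.

Lemma dotE (R : realType) (n : nat) (x y : 'rV[R]_n) :
  dot x y = \sum_j x 0 j * y 0 j.
Proof. by rewrite /dot !mxE; apply: eq_bigr => j _; rewrite mxE. Qed.

Lemma dotC (R : realType) (n : nat) (x y : 'rV[R]_n) : dot x y = dot y x.
Proof. by rewrite !dotE; apply: eq_bigr => j _; rewrite mulrC. Qed.

Lemma dotDl (R : realType) (n : nat) (x y z : 'rV[R]_n) :
  dot (x + y) z = dot x z + dot y z.
Proof. by rewrite !dotE -big_split; apply: eq_bigr => j _; rewrite mxE mulrDl. Qed.

Lemma dotZl (R : realType) (n : nat) (a : R) (x z : 'rV[R]_n) :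
  dot (a *: x) z = a * dot x z.
Proof. by rewrite !dotE mulr_sumr; apply: eq_bigr => j _; rewrite mxE mulrA. Qed.

Lemma dotNl (R : realType) (n : nat) (x z : 'rV[R]_n) :
  dot (- x) z = - dot x z.
Proof. by rewrite -scaleN1r dotZl mulN1r. Qed.

Lemma dotBl (R : realType) (n : nat) (x y z : 'rV[R]_n) :
  dot (x - y) z = dot x z - dot y z.
Proof. by rewrite dotDl dotNl. Qed.

Lemma dot0l (R : realType) (n : nat) (z : 'rV[R]_n) : dot 0 z = 0.
Proof. by rewrite -(scale0r (0 : 'rV[R]_n)) dotZl mul0r. Qed.

Lemma dot_suml (R : realType) (n : nat) (I : Type) (r : seq I) (P : pred I)
  (F : I -> 'rV[R]_n) z :
  dot (\sum_(i <- r | P i) F i) z = \sum_(i <- r | P i) dot (F i) z.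
Proof.
elim/big_rec2: _ => [|i y1 y2 _ <-]; first by rewrite dot0l.
by rewrite dotDl.
Qed.

Lemma dot_ge0 (R : realType) (n : nat) (x : 'rV[R]_n) : 0 <= dot x x.
Proof. by rewrite dotE sumr_ge0 // => j _; rewrite -expr2 sqr_ge0. Qed.

Lemma dot_eq0 (R : realType) (n : nat) (x : 'rV[R]_n) : dot x x = 0 -> x = 0.
Proof.
rewrite dotE => /eqP; rewrite psumr_eq0 => [/allP H|j _]; last by rewrite -expr2 sqr_ge0.
apply/rowP => j; rewrite mxE; have := H j (mem_index_enum j).
by rewrite /= -expr2 sqrf_eq0 => /eqP.
Qed.

Lemma dot_unit_bound (R : realType) (n : nat) (a b : 'rV[R]_n) :
  dot a a = 1 -> dot b b = 1 -> -1 <= - dot a b <= 1.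
Proof.
move=> ha hb.
have h1 := dot_ge0 (a - b); have h2 := dot_ge0 (a + b).
rewrite dotBl (dotC a) (dotC b) !dotBl (dotC b a) ha hb in h1.
rewrite dotDl (dotC a) (dotC b) !dotDl (dotC b a) ha hb in h2.
apply/andP; split; lra.
Qed.

Lemma foldr_formula (R : realType) (n : nat) (u : 'I_n.+1 -> 'rV[R]_n)
  (c : 'I_n.+1 -> R) (S : {set 'I_n.+1}) :
  (forall i j, i \in S -> j \in S -> i != j -> dot (u i) (u j) = 0) ->
  forall s, uniq s -> {subset s <= S} -> forall z,
  foldr (fun i f => refl (u i) (c i) \o f) id s z =
   z - \sum_(i <- s) (2 * (dot z (u i) - c i)) *: u i.
Proof.
move=> orth; elim=> [|i s IH] /= us sS z; first by rewrite big_nil subr0.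
move: us => /andP [nis us].
have sS' : {subset s <= S} by move=> j js; apply: sS; rewrite inE js orbT.
have iS : i \in S by apply: sS; rewrite inE eqxx.
rewrite IH // /refl big_cons.
have -> : dot (z - \sum_(j <- s) (2 * (dot z (u j) - c j)) *: u j) (u i) = dot z (u i).
  rewrite dotBl dot_suml big_seq big1 ?subr0 // => j js.
  rewrite dotZl orth ?mulr0 //; first exact: sS'.
  by apply: contraNneq nis => <-.
by rewrite opprD addrA addrAC.
Qed.

Lemma bip_inv_formula (R : realType) (n : nat) (u : 'I_n.+1 -> 'rV[R]_n)
  (c : 'I_n.+1 -> R) (S : {set 'I_n.+1}) :
  (forall i j, i \in S -> j \in S -> i != j -> dot (u i) (u j) = 0) ->
  forall z, bip_inv u c S z = z - \sum_(i in S) (2 * (dot z (u i) - c i)) *: u i.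
Proof.
move=> orth z; rewrite /bip_inv (@foldr_formula _ _ u c S orth) ?enum_uniq //.
  by rewrite big_enum.
by move=> j; rewrite mem_enum.
Qed.

Lemma bary (R : realType) (n : nat) (v : 'I_n.+1 -> 'rV[R]_n) :
  affinely_independent v -> forall z : 'rV[R]_n,
  exists l : 'I_n.+1 -> R, \sum_k l k = 1 /\ z = \sum_k l k *: v k.
Proof.
move=> ai z.
pose M : 'M[R]_(n.+1, 1 + n) :=
  \matrix_(k, j) (row_mx (const_mx 1 : 'rV[R]_1) (v k)) 0 j.
have Ml : forall (w : 'rV[R]_n.+1), (w *m M) 0 (lshift n (0 : 'I_1)) = \sum_k w 0 k.
  move=> w; rewrite mxE; apply: eq_bigr => k _.
  by rewrite mxE row_mxEl mxE mulr1.
have Mr : forall (w : 'rV[R]_n.+1) j, (w *m M) 0 (rshift 1 j) = (\sum_k w 0 k *: v k) 0 j.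
  move=> w j; rewrite mxE summxE; apply: eq_bigr => k _.
  by rewrite mxE row_mxEr mxE.
have uM : M \in unitmx.
  rewrite -row_free_unit -kermx_eq0; apply/negPn/negP => /rowV0Pn [w].
  move/sub_kermxP => wM0; apply/negP; rewrite negbK.
  have h1 : \sum_k w 0 k = 0 by rewrite -Ml wM0 mxE.
  have h2 : \sum_k w 0 k *: v k = 0.
    by apply/rowP => j; rewrite -Mr wM0 !mxE.
  apply/eqP/rowP => k; rewrite mxE.
  exact: (ai (fun k => w 0 k) h1 h2 k).
pose z' : 'rV[R]_(1 + n) := row_mx (const_mx 1 : 'rV[R]_1) z.
pose w : 'rV[R]_n.+1 := z' *m invmx M.
have wM : w *m M = z' by rewrite /w mulmxKV.
exists (fun k => w 0 k); split.
  by rewrite -Ml wM row_mxEl mxE.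
apply/rowP => j; rewrite -Mr wM row_mxEr.
by [].
Qed.

Lemma dot_sq_add (R : realType) (n : nat) (p q : 'rV[R]_n) :
  dot (p + q) (p + q) = dot p p + 2 * dot p q + dot q q.
Proof.
rewrite dotDl (dotC p) (dotC q) !dotDl (dotC q p); lra.
Qed.

Lemma hull_dot (R : realType) (n : nat) (v u : 'I_n.+1 -> 'rV[R]_n)
  (c : 'I_n.+1 -> R) (S : {set 'I_n.+1}) (x : 'rV[R]_n) :
  affine_hull (face v u c S) x -> forall i, i \in S -> dot x (u i) = c i.
Proof.
move=> [k [p [l [hp [hl ->]]]]] i iS.
rewrite dot_suml (eq_bigr (fun t => l t * c i)); last first.
  by move=> t _; rewrite dotZl; have [_ /(_ i iS) ->] := hp t.
by rewrite -mulr_suml hl mul1r.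
Qed.

Lemma flat_in_hull (R : realType) (n : nat) (v u : 'I_n.+1 -> 'rV[R]_n)
  (c : 'I_n.+1 -> R) (S : {set 'I_n.+1}) (a z : 'rV[R]_n) :
  affinely_independent v -> facet_normals v u c ->
  affine_hull (face v u c S) a ->
  (forall i, i \in S -> dot z (u i) = c i) -> affine_hull (face v u c S) z.
Proof.
move=> ai fn [k [p [l' [hp [hl' _]]]]] hz.
have [q hq] : exists q, face v u c S q.
  case: k p l' hp hl' => [|k] p l' hp hl'.
    by move: hl'; rewrite big_ord0 => /eqP; rewrite eq_sym oner_eq0.
  by exists (p ord0).
have [l [hl zE]] := bary ai z.
have l0 : forall i, i \in S -> l i = 0.
  move=> i iS; have := hz i iS.
  have [_ [hc hlt]] := fn i.
  rewrite zE dot_suml (bigD1 i) //= (eq_bigr (fun k => l k * c i)); last first.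
    by move=> t ti; rewrite dotZl hc.
  rewrite -mulr_suml.
  have -> : \sum_(t | t != i) l t = 1 - l i.
    by move: hl; rewrite (bigD1 i) //= => e; lra.
  rewrite dotZl => h.
  have : l i * (dot (v i) (u i) - c i) = 0 by rewrite mulrBr; lra.
  move/eqP; rewrite mulf_eq0 => /orP [/eqP //|]; rewrite subr_eq0 => /eqP e.
  by move: hlt; rewrite e ltxx.
have vf : forall t, t \notin S -> face v u c S (v t).
  move=> t tS; split.
    exists (fun kk => (kk == t)%:R); split; first by move=> kk; rewrite ler0n.
    split.
      by rewrite (bigD1 t) //= eqxx big1 ?addr0 // => kk /negbTE ->.
    rewrite (bigD1 t) //= eqxx scale1r big1 ?addr0 // => kk /negbTE ->.
    by rewrite scale0r.
  move=> i iS; have [_ [hc _]] := fn i; apply: hc.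
  by apply: contraNneq tS => ->.
exists n.+1, (fun t => if t \in S then q else v t), l; split.
  by move=> t; case: ifP => // /negbT; exact: vf.
split=> //; rewrite zE; apply: eq_bigr => t _.
by case: ifP => // tS; rewrite l0 // !scale0r.
Qed.

Lemma proj_eq (R : realType) (n : nat) (v u : 'I_n.+1 -> 'rV[R]_n)
  (c : 'I_n.+1 -> R) (S : {set 'I_n.+1}) (a b : 'rV[R]_n) :
  affinely_independent v -> facet_normals v u c ->
  (forall i j, i \in S -> j \in S -> i != j -> dot (u i) (u j) = 0) ->
  affine_hull (face v u c S) a ->
  (forall y, affine_hull (face v u c S) y -> dot (a - b) (a - b) <= dot (y - b) (y - b)) ->
  b - a = \sum_(i in S) (dot b (u i) - c i) *: u i.
Proof.
move=> ai fn orth ha hmin.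
have [s sE] : exists s : 'rV[R]_n, s = \sum_(i in S) (dot b (u i) - c i) *: u i by eexists.
rewrite -sE.
have [y yE] : exists y : 'rV[R]_n, y = b - s by eexists.
have hy : forall j, j \in S -> dot y (u j) = c j.
  move=> j jS; rewrite yE (_ : dot (b - s) (u j) = dot b (u j) - dot s (u j)); last exact: dotBl.
  rewrite sE dot_suml (bigD1 j) //= big1 ?addr0.
    have [h1 _] := fn j; rewrite dotZl h1 mulr1; lra.
  by move=> i /andP [iS ij]; rewrite dotZl orth ?mulr0.
have yh := flat_in_hull ai fn ha hy.
have := hmin y yh.
have -> : a - b = (a - y) + (y - b) by rewrite addrA subrK.
have yb : y - b = - s by rewrite yE addrAC subrr add0r.
rewrite dot_sq_add.
have -> : dot (a - y) (y - b) = 0.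
  rewrite yb dotC dotNl sE dot_suml big1 ?oppr0 // => i iS.
  by rewrite dotZl (dotC (u i)) dotBl (hull_dot ha iS) hy // subrr mulr0.
move=> h.
have h0 : dot (a - y) (a - y) = 0 by have := dot_ge0 (a - y); lra.
have := dot_eq0 h0; move/eqP; rewrite subr_eq0 => /eqP ->.
by rewrite yE opprB addrC subrK.
Qed.

Lemma orth_of (R : realType) (n : nat) (u : 'I_n.+1 -> 'rV[R]_n)
  (m : 'I_n.+1 -> 'I_n.+1 -> nat) (S0 S : {set 'I_n.+1}) :
  (forall i, dot (u i) (u i) = 1) -> coxeter_angles u m ->
  is_bipartition m S0 -> (forall i j, i \in S -> j \in S -> (i \in S0) = (j \in S0)) ->
  forall i j, i \in S -> j \in S -> i != j -> dot (u i) (u j) = 0.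
Proof.
move=> un ca bp hS i j iS jS ij.
have [m2 ang] := ca i j ij.
have nd : ~~ diagram m i j.
  by apply/negP => /bp; rewrite (hS i j iS jS) eqxx.
have m2' : m i j = 2%N.
  by move: nd; rewrite /diagram ij /= -ltnNge ltnS => h; apply/eqP; rewrite eqn_leq h m2.
rewrite /dihedral_angle m2' in ang.
have hb := dot_unit_bound (un i) (un j).
have : cos (acos (- dot (u i) (u j))) = cos (pi / 2%:R) by rewrite ang.
rewrite acosK; last by rewrite in_itv /=.
rewrite cos_pihalf => /eqP; rewrite oppr_eq0 => /eqP //.
Qed.

Lemma refl_line (R : realType) (n : nat) (u : 'I_n.+1 -> 'rV[R]_n)
  (c : 'I_n.+1 -> R) (S : {set 'I_n.+1}) (w : 'rV[R]_n -> 'rV[R]_n) (a b : 'rV[R]_n) :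
  (forall z, w z = z - \sum_(i in S) (2 * (dot z (u i) - c i)) *: u i) ->
  (forall i, i \in S -> dot a (u i) = c i) ->
  b - a = \sum_(i in S) (dot b (u i) - c i) *: u i ->
  forall z s, z - a = s *: (b - a) -> w z = 2 *: a - z.
Proof.
move=> hw ha hb z s hz; rewrite hw.
have -> : \sum_(i in S) (2 * (dot z (u i) - c i)) *: u i = (2 * s) *: (b - a).
  rewrite hb scaler_sumr; apply: eq_bigr => i iS; rewrite scalerA.
  congr (_ *: _).
  have : dot (z - a) (u i) = s * dot (b - a) (u i) by rewrite hz dotZl.
  rewrite !dotBl ha //; lra.
rewrite -scalerA -hz; apply/rowP => j; rewrite !mxE; ring.
Qed.

Lemma line_refl (R : realType) (n : nat) (x0 x1 p y : 'rV[R]_n) :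
  line_through x0 x1 p -> line_through x0 x1 y -> line_through x0 x1 (2 *: p - y).
Proof.
move=> [tp _ <-] [t _ <-]; exists (2 * tp - t) => //.
apply/rowP => j; rewrite !mxE; ring.
Qed.

Lemma restricts (R : realType) (n : nat) (x0 x1 p : 'rV[R]_n) (w : 'rV[R]_n -> 'rV[R]_n) :
  line_through x0 x1 p ->
  (forall z, line_through x0 x1 z -> w z = 2 *: p - z) ->
  restricts_to_reflection_fixing w (line_through x0 x1) p.
Proof.
move=> Lp hw; split; [|split] => //.
  apply/seteqP; split.
    by move=> _ [y Ly <-]; rewrite hw //; exact: line_refl.
  move=> y Ly; exists (2 *: p - y); first exact: line_refl.
  rewrite hw; last exact: line_refl.
  by apply/rowP => j; rewrite !mxE; ring.
apply/seteqP; split.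
  move=> y [Ly]; rewrite hw // => /rowP h; apply/rowP => j.
  have := h j; rewrite !mxE; lra.
move=> y ->; split => //; rewrite hw //.
by apply/rowP => j; rewrite !mxE; ring.
Qed.

Lemma dist_le (R : realType) (n : nat) (a b c d : 'rV[R]_n) :
  eucl_dist a b <= eucl_dist c d -> dot (a - b) (a - b) <= dot (c - d) (c - d).
Proof. by rewrite /eucl_dist ler_sqrt // dot_ge0. Qed.

Lemma dot_subC (R : realType) (n : nat) (a b : 'rV[R]_n) :
  dot (a - b) (a - b) = dot (b - a) (b - a).
Proof.
by rewrite -opprB dotNl dotC dotNl opprK.
Qed.

Theorem lemma8p7 (R : realType) (n : nat) (v u : 'I_n.+1 -> 'rV[R]_n)
  (c : 'I_n.+1 -> R) (m : 'I_n.+1 -> 'I_n.+1 -> nat) (S0 : {set 'I_n.+1})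
  (x0 x1 : 'rV[R]_n) :
  affinely_independent v ->
  facet_normals v u c ->
  coxeter_angles u m ->
  irreducible_diagram m ->
  ~ type_tildeA m ->
  is_bipartition m S0 ->
  let B0 := affine_hull (face v u c S0) in
  let B1 := affine_hull (face v u c (~: S0)) in
  B0 x0 -> B1 x1 ->
  (forall y0 y1, B0 y0 -> B1 y1 -> eucl_dist x0 x1 <= eucl_dist y0 y1) ->
  let L := line_through x0 x1 in
  restricts_to_reflection_fixing (bip_inv u c S0) L x0 /\
  restricts_to_reflection_fixing (bip_inv u c (~: S0)) L x1.
Proof.
move=> ai fn ca _ _ bp B0 B1 h0 h1 hmin L.
have un : forall i, dot (u i) (u i) = 1 by move=> i; have [] := fn i.
have o0 := orth_of un ca bp (S := S0) (fun i j iS jS => etrans (idP iS) (esym jS)).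
have o1 := orth_of un ca bp (S := ~: S0).
have {}o1 : forall i j, i \in ~: S0 -> j \in ~: S0 -> i != j -> dot (u i) (u j) = 0.
  apply: o1 => i j; rewrite !inE => /negbTE -> /negbTE ->.
  by [].
split.
  apply: restricts; first by exists 0 => //; rewrite scale0r addr0.
  move=> z [t _ <-].
  apply: (refl_line (bip_inv_formula c o0) (hull_dot h0)) (t) _.
    apply: (proj_eq ai fn o0 h0) => y hy.
    by apply: dist_le; apply: hmin.
  by rewrite addrAC subrr add0r.
apply: restricts; first by exists 1 => //; rewrite scale1r addrC subrK.
move=> z [t _ <-].
apply: (refl_line (bip_inv_formula c o1) (hull_dot h1)) (1 - t) _.
  apply: (proj_eq ai fn o1 h1) => y hy.
  rewrite dot_subC (dot_subC y); apply: dist_le; apply: hmin => //.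
by apply/rowP => j; rewrite !mxE; ring.
Qed.
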